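(* Let $G$, $k\ge 3$, the choice strings $c_{i,j}$, the template string $t$, $L$ and $d$ be as in the binary construction in the context, and let $s\in\{0,1\}^L$ be a solution, i.e. $t$ and every choice string $c_{i,j}$ ($1\le i<j\le k$) have a substring of length $L$ (a match) at Hamming distance at most $d$ from $s$. Then $s$ and all its matches in $t$ and in the choice strings start with $\mathrm{front\_tag}$.
   Context: Let $G=(V,E)$ be an undirected simple graph with $V=\{v_1,\dots,v_n\}$ and edge set $E=\{e_1,\dots,e_m\}$, and let $k\ge 3$ be an integer; put $N=\binom{k}{2}$ and $b=nk-2k+2$. All strings are over $\{0,1\}$. For $1\le p\le n$ let $\mathrm{number}(p)=0^{p-1}10^{n-p}$. Let $\mathrm{front\_tag}=(1^{3nk}0)^{nk}$ (length $(3nk+1)nk$). Order the pairs $(i,j)$, $1\le i<j\le k$, lexicographically and let $i'$ be the position of $(i,j)$ in this order. For an edge $e$ joining $v_r,v_s$ with $r<s$ let $\mathrm{encode}(i,j,e)=(0^n)^{i-1}\,\mathrm{number}(r)\,(0^n)^{j-i-1}\,\mathrm{number}(s)\,(0^n)^{k-j}$, $\mathrm{back\_tag}(i')=0^{(i'-1)b}1^{b}0^{(N-i')b}$, and $\mathrm{block}(i,j,e)=\mathrm{front\_tag}\,\mathrm{encode}(i,j,e)\,\mathrm{back\_tag}(i')$. The choice string is $c_{i,j}=\mathrm{block}(i,j,e_1)\cdots\mathrm{block}(i,j,e_m)$. The template string is $t=\mathrm{front\_tag}\,1^{nk}\,0^{Nb}$. Set $L=(3nk+1)nk+nk+Nb$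 and $d=nk-k$. *)

(* Defs.v *)
From mathcomp Require Import all_boot.
Set Implicit Arguments. Unset Strict Implicit. Unset Printing Implicit Defensive.

Section Construction.
Variables (n k : nat) (E : seq (nat * nat)).

Definition NN : nat := 'C(k, 2).
Definition bb : nat := n * k - 2 * k + 2.

Definition zeros_n : seq bool := nseq n false.

Definition number (p : nat) : seq bool :=
  nseq (p - 1) false ++ true :: nseq (n - p) false.

Definition front_tag : seq bool :=
  flatten (nseq (n * k) (rcons (nseq (3 * n * k) true) false)).

Definition pairs_lex : seq (nat * nat) :=
  [seq (i, j) | i <- iota 1 k, j <- iota i.+1 (k - i)].

Definition pair_pos (i j : nat) : nat := (index (i, j) pairs_lex).+1.

(* encode(i,j,e) for e = {v_r, v_s}, r < s *)
Definition encode (i j : nat) (e : nat * nat) : seq bool :=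
  flatten (nseq (i - 1) zeros_n) ++ number e.1 ++
  flatten (nseq (j - i - 1) zeros_n) ++ number e.2 ++
  flatten (nseq (k - j) zeros_n).

Definition back_tag (ip : nat) : seq bool :=
  nseq ((ip - 1) * bb) false ++ nseq bb true ++ nseq ((NN - ip) * bb) false.

Definition block (i j : nat) (e : nat * nat) : seq bool :=
  front_tag ++ encode i j e ++ back_tag (pair_pos i j).

Definition choice_string (i j : nat) : seq bool :=
  flatten [seq block i j e | e <- E].

Definition template : seq bool :=
  front_tag ++ nseq (n * k) true ++ nseq (NN * bb) false.

Definition LL : nat := (3 * n * k + 1) * (n * k) + n * k + NN * bb.
Definition dd : nat := n * k - k.

End Construction.

Definition hamming (u v : seq bool) : nat :=
  count (fun p : bool * bool => p.1 != p.2) (zip u v).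

Definition substr (w : seq bool) (p l : nat) : seq bool := take l (drop p w).

Definition is_match_at (w s : seq bool) (d p : nat) : Prop :=
  p + size s <= size w /\ hamming s (substr w p (size s)) <= d.

Definition simple_graph_edges (n : nat) (E : seq (nat * nat)) : Prop :=
  uniq E /\ forall e, e \in E -> 1 <= e.1 /\ e.1 < e.2 /\ e.2 <= n.

Definition is_solution (n k : nat) (E : seq (nat * nat)) (s : seq bool) : Prop :=
  size s = LL n k /\
  (exists p, is_match_at (template n k) s (dd n k) p) /\
  (forall i j, 1 <= i -> i < j -> j <= k ->
     exists p, is_match_at (choice_string n k E i j) s (dd n k) p).

(* Main.v *)
Require Import Defs.
From mathcomp Require Import all_boot zify.
Import Defs.
Set Implicit Arguments. Unset Strict Implicit. Unset Printing Implicit Defensive.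

Lemma cnt_le_w (T : eqType) (a1 a2 b1 b2 : pred T) (w : nat) (s : seq T) :
  (forall x, x \in s -> a1 x + w * a2 x <= b1 x + b2 x) ->
  count a1 s + w * count a2 s <= count b1 s + count b2 s.
Proof.
elim: s => [|x s IH] H /=; first by rewrite muln0.
have h1 := H x (mem_head _ _).
have h2 : count a1 s + w * count a2 s <= count b1 s + count b2 s.
  by apply: IH => y hy; apply: H; rewrite in_cons hy orbT.
rewrite mulnDr; lia.
Qed.

Lemma cnt_sub (a : pred nat) m n m' n' :
  m <= m' -> m' + n' <= m + n -> count a (iota m' n') <= count a (iota m n).
Proof.
move=> h1 h2.
have -> : n = (m' - m) + (n' + (m + n - (m' + n'))) by lia.
rewrite iotaD iotaD !count_cat.
have -> : m + (m' - m) = m' by lia.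
lia.
Qed.

Lemma cnt_period P c a : 0 < P -> c < P ->
  count (fun j => j %% P == c) (iota a P) = 1.
Proof.
move=> hP hc; elim: a => [|a IH].
  rewrite (@eq_in_count _ _ (fun j => j == c)); last first.
    by move=> j; rewrite mem_iota add0n => /andP[_ h]; rewrite modn_small.
  by rewrite count_uniq_mem ?iota_uniq // mem_iota hc.
move: IH; case: P hP hc => [//|Q] _ hc.
have e : iota a.+1 Q.+1 = iota a.+1 Q ++ [:: a.+1 + Q] by rewrite -[Q.+1]addn1 iotaD.
rewrite e [iota a _]/= count_cat /= addn0.
have -> : (a.+1 + Q) %% Q.+1 = a %% Q.+1.
  by rewrite -(modnDr a Q.+1); congr (_ %% _); lia.
lia.
Qed.

Lemma cnt_small P c a r : 0 < P -> c < P -> r <= P ->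
  count (fun j => j %% P == c) (iota a r) <= 1.
Proof.
move=> hP hc hr; rewrite -(cnt_period a hP hc); apply: cnt_sub; lia.
Qed.

Lemma cnt_mult P c a q : 0 < P -> c < P ->
  count (fun j => j %% P == c) (iota a (q * P)) = q.
Proof.
move=> hP hc; elim: q a => [|q IH] a; first by rewrite mul0n.
by rewrite mulSn iotaD count_cat cnt_period // IH add1n.
Qed.

Lemma cnt_bounds P c a y : 0 < P -> c < P ->
  y %/ P <= count (fun j => j %% P == c) (iota a y) <= y %/ P + 1.
Proof.
move=> hP hc; rewrite [in iota a y](divn_eq y P) iotaD count_cat cnt_mult //.
have := cnt_small (a + y %/ P * P) hP hc (ltnW (ltn_pmod y hP)); lia.
Qed.

Lemma cnt_shift P c d a y :
  count (fun j => (j + d) %% P == c) (iota a y) =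
  count (fun j => j %% P == c) (iota (a + d) y).
Proof.
rewrite (addnC a) iotaDl count_map; apply: eq_count => j /=; by rewrite addnC.
Qed.

Lemma cnt_le_n (a1 a2 b1 b2 : nat -> bool) (w : nat) (s : seq nat) :
  (forall x, x \in s -> a1 x + w * a2 x <= b1 x + b2 x) ->
  count a1 s + w * count a2 s <= count b1 s + count b2 s.
Proof. exact: cnt_le_w. Qed.

Lemma front_bound P c d a l (wf : nat -> bool) : 0 < P -> c < P -> d %% P != 0 ->
  (forall j, a <= j < a + l -> wf j = ((j + d) %% P != c)) ->
  2 * (l %/ P) <= count (fun j => (j %% P != c) != wf j) (iota a l).
Proof.
move=> hP hc hd hw.
have h2 : forall x, x \in iota a l ->
    (x %% P == c) + 1 * ((x + d) %% P == c) <= ((x %% P != c) != wf x) + pred0 x.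
  move=> x; rewrite mem_iota => hx; rewrite hw // /= addn0 mul1n.
  case E1: (x %% P == c); case E2: ((x + d) %% P == c) => //=.
  move/eqP: E1 => E1; move/eqP: E2 => E2.
  have : (x + d == x + 0 %[mod P]) by rewrite addn0 E1 E2.
  by rewrite eqn_modDl mod0n (negbTE hd).
have := @cnt_le_n (fun j => j %% P == c) (fun j => (j+d) %% P == c)
  (fun j => (j %% P != c) != wf j) pred0 1 (iota a l) h2.
rewrite count_pred0 addn0 mul1n cnt_shift.
have /andP[b1 _] := cnt_bounds a l hP hc.
have /andP[b2 _] := cnt_bounds (a + d) l hP hc.
lia.
Qed.

Lemma tail_bound P c a y (wf : nat -> bool) ones : 0 < P -> c < P ->
  count wf (iota a y) <= ones ->
  y - ones - (y %/ P + 1) <= count (fun j => (j %% P != c) != wf j) (iota a y).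
Proof.
move=> hP hc hw.
have h2 : forall x, x \in iota a y ->
    (predC wf) x + 0 * pred0 x <= ((x %% P != c) != wf x) + (x %% P == c).
  move=> x _ /=; rewrite mul0n addn0.
  by case: (wf x); case: (x %% P == c).
have := @cnt_le_n (predC wf) pred0
  (fun j => (j %% P != c) != wf j) (fun j => j %% P == c) 0 (iota a y) h2.
rewrite mul0n addn0.
have := count_predC wf (iota a y); rewrite size_iota.
have /andP[_ b1] := cnt_bounds a y hP hc.
lia.
Qed.

Lemma cnt_from0 (g : pred nat) a y : count g (iota a y) = count (fun i => g (a + i)) (iota 0 y).
Proof. by rewrite -{1}[a]addn0 iotaDl count_map. Qed.

Lemma tail_num K k N b y : 3 <= k -> 2 * k <= K -> b = K - 2 * k + 2 -> 3 <= N ->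
  (3 * K <= y \/ y = K + N * b) ->
  2 * K - 2 * k + 1 <= y - (b + 2) - (y %/ (3 * K).+1 + 1).
Proof.
move=> hk hK hb hN hy.
have hNb : 3 * b <= N * b by rewrite leq_mul2r hN orbT.
have e := divn_eq y (3 * K).+1.
have lt := ltn_pmod y (ltn0Sn (3 * K)).
set q := y %/ (3 * K).+1 in e *; set r := y %% (3 * K).+1 in e lt *.
have [h3|h3] := leqP (3 * K) y.
  have : q <= y - 3 * K.
    case: q e => [|q'] e; first by lia.
    nia.
  lia.
case: hy => hy; first by lia.
have q0 : q = 0 by nia.
lia.
Qed.

Lemma tail_region (wf : nat -> bool) (tl : nat -> bool) a y tau M :
  tau + y <= M -> (forall i, i < y -> wf (a + i) = tl (tau + i)) ->
  count wf (iota a y) <= count tl (iota 0 M).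
Proof.
move=> h1 h2.
rewrite cnt_from0 (eq_in_count (a2 := fun i => tl (tau + i))); last first.
  by move=> i; rewrite mem_iota => /andP[_ hi]; apply: h2.
rewrite -cnt_from0; apply: cnt_sub; lia.
Qed.

Lemma misalign K k N b m (cf : nat -> bool) (tl : nat -> nat -> bool) p :
  3 <= k -> 2 * k <= K -> b = K - 2 * k + 2 -> 3 <= N ->
  (forall q o, q < m -> o < K * (3 * K).+1 + (K + N * b) ->
     cf (q * (K * (3 * K).+1 + (K + N * b)) + o) =
     if o < K * (3 * K).+1 then o %% (3 * K).+1 != 3 * K else tl q (o - K * (3 * K).+1)) ->
  (forall q, q < m -> count (tl q) (iota 0 (K + N * b)) <= b + 2) ->
  p + (K * (3 * K).+1 + (K + N * b)) <= m * (K * (3 * K).+1 + (K + N * b)) ->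
  p %% (K * (3 * K).+1 + (K + N * b)) != 0 ->
  2 * K - 2 * k + 1 <=
    count (fun j => (j %% (3 * K).+1 != 3 * K) != cf (p + j)) (iota 0 (K * (3 * K).+1)).
Proof.
set P := (3 * K).+1; set F := K * P; set M := K + N * b; set L := F + M.
move=> hk hK hb hN hcf htl hpL hr.
have hP : 0 < P by [].
have hc : 3 * K < P by rewrite /P.
have hFP : P <= F by rewrite /F leq_pmull //; lia.
have hM : K <= M by rewrite /M leq_addr.
have hL : 0 < L by rewrite /L; lia.
set q := p %/ L; set r := p %% L.
have hp : p = q * L + r by rewrite /q /r -divn_eq.
have rL : r < L by rewrite /r ltn_pmod.
have r0 : 0 < r by rewrite lt0n.
have qm : q < m.
  rewrite ltnNge; apply/negP => hmq.
  have := leq_mul hmq (leqnn L); lia.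
have cfA : forall j, r + j < L ->
    cf (p + j) = if r + j < F then (r + j) %% P != 3 * K else tl q (r + j - F).
  by move=> j hj; rewrite hp -addnA hcf.
set mism := fun j => (j %% P != 3 * K) != cf (p + j).
have sub : forall a l, a + l <= F -> count mism (iota a l) <= count mism (iota 0 F).
  by move=> a l hal; apply: cnt_sub; lia.
have tailcase : forall a y tau, a + y <= F -> tau + y <= M -> (3 * K <= y \/ y = M) ->
    (forall i, i < y -> cf (p + (a + i)) = tl q (tau + i)) ->
    2 * K - 2 * k + 1 <= count mism (iota 0 F).
  move=> a y tau h1 h2 h3 h4.
  have hcnt : count (fun j => cf (p + j)) (iota a y) <= b + 2.
    apply: leq_trans (htl q qm); exact: tail_region h2 h4.
  have := tail_bound hP hc hcnt.
  have := tail_num hk hK hb hN h3.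
  have := sub a y h1.
  rewrite /mism /P; lia.
have frontcase : forall a l d, a + l <= F -> d %% P != 0 -> P <= l + P ->
    (K.-1) * P <= l ->
    (forall j, a <= j < a + l -> cf (p + j) = ((j + d) %% P != 3 * K)) ->
    2 * K - 2 * k + 1 <= count mism (iota 0 F).
  move=> a l d h1 h2 _ h3 h4.
  have := front_bound hP hc h2 h4.
  have : K.-1 <= l %/ P by rewrite leq_divRL.
  have := sub a l h1.
  rewrite /mism; lia.
have hKP : K * P = K.-1 * P + P by rewrite -mulSnr prednK //; lia.
have hFL : F < L by rewrite /L; lia.
have [hrF|hrF] := ltnP r F.
  have [hMr|hMr] := ltnP M r.
    apply: (@tailcase (F - r) M 0) => //; first lia; first by right.
    move=> i hi; rewrite cfA; last lia.
    have -> : (r + (F - r + i) < F) = false by apply/negbTE; rewrite -leqNgt; lia.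
    congr (tl q _); lia.
  have [h3r|h3r] := leqP (3 * K) r.
    apply: (@tailcase (F - r) r 0) => //; first lia; first by left.
    move=> i hi; rewrite cfA; last lia.
    have -> : (r + (F - r + i) < F) = false by apply/negbTE; rewrite -leqNgt; lia.
    congr (tl q _); lia.
  apply: (@frontcase 0 (F - r) r) => //; first lia.
  - rewrite modn_small; lia.
  - lia.
  - rewrite /F; lia.
  - move=> j hj; rewrite cfA; last lia.
    rewrite ifT; last lia.
    by rewrite (addnC r j).
set y0 := L - r.
have [h3y|h3y] := leqP (3 * K) y0.
  apply: (@tailcase 0 (minn y0 F) (r - F)) => //; first lia; first lia; first by left; lia.
  move=> i hi; rewrite cfA; last lia.
  have -> : (r + (0 + i) < F) = false by apply/negbTE; rewrite -leqNgt; lia.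
  congr (tl q _); lia.
have qm1 : q.+1 < m.
  rewrite ltnNge; apply/negP => hmq.
  have := leq_mul hmq (leqnn L); rewrite mulSn; lia.
apply: (@frontcase y0 (F - y0) (P - y0)) => //; first lia.
- by rewrite modn_small; lia.
- lia.
- rewrite /F; lia.
- move=> j hj.
  have -> : p + j = q.+1 * L + (j - y0) by rewrite hp mulSn; lia.
  rewrite hcf //; last lia.
  rewrite ifT; last lia.
  have -> : j + (P - y0) = (j - y0) + P by lia.
  by rewrite modnDr.
Qed.

Lemma hamming_nth (u v : seq bool) : size u = size v ->
  hamming u v = count (fun j => nth false u j != nth false v j) (iota 0 (size u)).
Proof.
elim: u v => [|x u IH] [|y v] //= [] hs.
rewrite /hamming /= -/(hamming u v) IH // -[1]addn0 iotaDl count_map.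
by congr (_ + _); apply: eq_count => j.
Qed.

Lemma hamming_cat (a1 a2 b1 b2 : seq bool) : size a1 = size b1 ->
  hamming (a1 ++ a2) (b1 ++ b2) = hamming a1 b1 + hamming a2 b2.
Proof. by move=> h; rewrite /hamming zip_cat // count_cat. Qed.

Lemma hamming_refl (a : seq bool) : hamming a a = 0.
Proof. by elim: a => [|x a IH] //=; rewrite /hamming /= eqxx. Qed.

Lemma hamming_nseq (x : bool) (e : seq bool) :
  hamming (nseq (size e) x) e = count (fun y => x != y) e.
Proof. by elim: e => [|y e IH] //=; rewrite /hamming /= -/(hamming _ _) IH. Qed.

Lemma size_flatten_nseq (T : Type) m (u : seq T) : size (flatten (nseq m u)) = m * size u.
Proof. by elim: m => [|m IH] //=; rewrite size_cat IH mulSn. Qed.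

Lemma nth_flatten_nseq (T : Type) (x0 : T) m (u : seq T) j : j < m * size u ->
  nth x0 (flatten (nseq m u)) j = nth x0 u (j %% size u).
Proof.
elim: m j => [|m IH] j; first by rewrite mul0n.
move=> hj /=; rewrite nth_cat.
case: ltnP => h; first by rewrite modn_small.
rewrite IH; last by rewrite mulSn in hj; lia.
by rewrite -(modnDr (j - size u)) subnK.
Qed.

Lemma front_size n k : size (front_tag n k) = n * k * (3 * (n * k)).+1.
Proof. by rewrite /front_tag size_flatten_nseq size_rcons size_nseq mulnA. Qed.

Lemma front_nth n k j : j < n * k * (3 * (n * k)).+1 ->
  nth false (front_tag n k) j = (j %% (3 * (n * k)).+1 != 3 * (n * k)).
Proof.
move=> hj; rewrite /front_tag nth_flatten_nseq; last by rewrite size_rcons size_nseq -(mulnA 3 n k).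
rewrite size_rcons size_nseq -(mulnA 3 n k) nth_rcons size_nseq nth_nseq.
have := ltn_pmod j (ltn0Sn (3 * (n * k))).
move: (j %% _) => o ho.
case: (ltngtP o (3 * (n * k))) => h //=.
by move: ho; rewrite ltnS leqNgt h.
Qed.

Lemma flatten_zeros n m : flatten (nseq m (zeros_n n)) = nseq (m * n) false.
Proof. by elim: m => [|m IH] //=; rewrite IH mulSn nseqD. Qed.

Lemma size_number n p : 1 <= p <= n -> size (number n p) = n.
Proof. by move=> h; rewrite /number size_cat /= !size_nseq; lia. Qed.

Lemma count_number n p : count id (number n p) = 1.
Proof. by rewrite /number count_cat /= !count_nseq /=; lia. Qed.

Lemma encode_size n k i j (e : nat * nat) : 1 <= i -> i < j -> j <= k ->
  1 <= e.1 <= n -> 1 <= e.2 <= n -> size (encode n k i j e) = n * k.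
Proof.
move=> h1 h2 h3 h4 h5.
rewrite /encode !size_cat !flatten_zeros !size_nseq /= !size_nseq.
have -> : e.1 - 1 + (n - e.1).+1 = n by lia.
have -> : e.2 - 1 + (n - e.2).+1 = n by lia.
have hk : (i - 1) + 1 + (j - i - 1) + 1 + (k - j) = k by lia.
rewrite -[in RHS]hk.
move: (i - 1) (j - i - 1) (k - j) => a b c.
rewrite !mulnDr !muln1 (mulnC n a) (mulnC n b) (mulnC n c); lia.
Qed.

Lemma encode_count n k i j e : count id (encode n k i j e) = 2.
Proof. by rewrite /encode /number !count_cat !flatten_zeros /= !count_nseq /= !mul0n. Qed.

Lemma back_count n k ip : count id (back_tag n k ip) = bb n k.
Proof. by rewrite /back_tag !count_cat !count_nseq /=; lia. Qed.

Lemma back_size n k ip : 1 <= ip <= NN k -> size (back_tag n k ip) = NN k * bb n k.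
Proof.
move=> h; rewrite /back_tag !size_cat !size_nseq.
have hk : (ip - 1) + 1 + (NN k - ip) = NN k by lia.
rewrite -[in RHS]hk.
move: (ip - 1) (NN k - ip) => a c.
rewrite !mulnDl !mul1n; lia.
Qed.

Lemma sumn_succ (s : seq nat) (f : nat -> nat) :
  sumn [seq (f x).+1 | x <- s] = sumn [seq f x | x <- s] + size s.
Proof. elim: s => [|x s IH] //=; rewrite IH; lia. Qed.

Lemma pairs_size k : size (pairs_lex k) = 'C(k, 2).
Proof.
rewrite /pairs_lex size_allpairs_dep.
rewrite (eq_map (g := fun i => k - i)); last by move=> i; rewrite size_iota.
elim: k => [|k IH] //.
have e : iota 1 k.+1 = iota 1 k ++ [:: k.+1] by rewrite -[k.+1 in LHS]addn1 iotaD add1n.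
rewrite e map_cat sumn_cat /= subnn !addn0.
have e2 : [seq k.+1 - i | i <- iota 1 k] = [seq (k - i).+1 | i <- iota 1 k].
  by apply/eq_in_map => i; rewrite mem_iota => /andP[h1 h2]; lia.
rewrite e2 sumn_succ IH size_iota.
by rewrite binS bin1.
Qed.

Lemma pair_pos_le k i j : 1 <= i -> i < j -> j <= k -> 1 <= pair_pos k i j <= NN k.
Proof.
move=> h1 h2 h3; rewrite /pair_pos /NN -pairs_size /= index_mem.
apply: allpairs_f_dep; rewrite mem_iota; lia.
Qed.

Lemma size_flatten_map (f : nat * nat -> seq bool) (E : seq (nat * nat)) L :
  (forall e, e \in E -> size (f e) = L) -> size (flatten (map f E)) = size E * L.
Proof.
elim: E => [|e E IH] h //=.
have h' : forall x, x \in E -> size (f x) = L by move=> x hx; apply: h; rewrite in_cons hx orbT.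
by rewrite size_cat h ?mem_head // IH // mulSn.
Qed.

Lemma nth_flatten_map (f : nat * nat -> seq bool) (E : seq (nat * nat)) L q o :
  (forall e, e \in E -> size (f e) = L) -> q < size E -> o < L ->
  nth false (flatten (map f E)) (q * L + o) = nth false (f (nth (0, 0) E q)) o.
Proof.
elim: E q => [|e E IH] q h //= hq ho.
rewrite nth_cat h ?mem_head //.
case: q hq => [|q] hq /=; first by rewrite mul0n add0n ho.
rewrite mulSn -addnA ltnNge leq_addr /= addKn IH //.
by move=> x hx; apply: h; rewrite in_cons hx orbT.
Qed.

Lemma nth_substr (w : seq bool) p l j : j < l -> nth false (substr w p l) j = nth false w (p + j).
Proof. by move=> h; rewrite /substr nth_take // nth_drop. Qed.

Lemma size_substr (w : seq bool) p l : p + l <= size w -> size (substr w p l) = l.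
Proof. by move=> h; rewrite /substr size_takel // size_drop; lia. Qed.

Lemma LL_eq n k : LL n k = n * k * (3 * (n * k)).+1 + (n * k + NN k * bb n k).
Proof. rewrite /LL; lia. Qed.

Lemma block_size n k i j e : 1 <= i -> i < j -> j <= k ->
  1 <= e.1 <= n -> 1 <= e.2 <= n -> size (block n k i j e) = LL n k.
Proof.
move=> h1 h2 h3 h4 h5.
rewrite /block size_cat front_size size_cat encode_size // back_size ?pair_pos_le // LL_eq; lia.
Qed.

Lemma template_size n k : size (template n k) = LL n k.
Proof. rewrite /template !size_cat front_size !size_nseq LL_eq; lia. Qed.

Lemma tail_count n k i j e :
  count id (encode n k i j e ++ back_tag n k (pair_pos k i j)) = bb n k + 2.
Proof. by rewrite count_cat encode_count back_count addnC. Qed.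

Lemma count_nth_iota (w : seq bool) : count (nth false w) (iota 0 (size w)) = count id w.
Proof. by rewrite -[in RHS](mkseq_nth false w) /mkseq count_map. Qed.

Lemma aligned n k E s i j p :
  simple_graph_edges n E -> 3 <= k -> 2 <= n ->
  size s = LL n k -> hamming s (template n k) <= dd n k ->
  1 <= i -> i < j -> j <= k ->
  is_match_at (choice_string n k E i j) s (dd n k) p ->
  p %% LL n k = 0.
Proof.
move=> [uE hE] hk hn hs hst hi hij hjk [hp hsw].
have hN : 3 <= NN k by rewrite /NN; have := leq_bin2l 2 hk.
have hK : 2 * k <= n * k by rewrite leq_mul2r hn orbT.
have bsz : forall e, e \in E -> size (block n k i j e) = LL n k.
  move=> [a c] he; have [h1 [h2 h3]] := hE _ he; apply: block_size => //=; apply/andP; split; simpl in *; lia.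
have csz : size (choice_string n k E i j) = size E * LL n k by apply: size_flatten_map.
have tsz := template_size n k.
rewrite hs in hp hsw.
apply/eqP; apply: contraT => hr.
pose cf := fun x => nth false (choice_string n k E i j) x.
pose tl := fun q o => nth false (encode n k i j (nth (0, 0) E q) ++ back_tag n k (pair_pos k i j)) o.
have hFL : n * k * (3 * (n * k)).+1 <= LL n k by rewrite LL_eq leq_addr.
have hEq : forall q, q < size E -> let e := nth (0, 0) E q in
    1 <= e.1 /\ e.1 < e.2 /\ e.2 <= n.
  by move=> q hq; apply: hE; apply: mem_nth.
have H : 2 * (n * k) - 2 * k + 1 <=
    count (fun x => (x %% (3 * (n * k)).+1 != 3 * (n * k)) != cf (p + x))
      (iota 0 (n * k * (3 * (n * k)).+1)).
  apply: (@misalign (n * k) k (NN k) (bb n k) (size E) cf tl p hk hK erefl hN);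
    rewrite -?LL_eq //; last by rewrite -csz.
  - move=> q o hq ho.
    rewrite /cf /choice_string nth_flatten_map // /block nth_cat front_size.
    by case: ifP => h //; rewrite front_nth.
  - move=> q hq; rewrite /tl.
    have [h1 [h2 h3]] := hEq q hq.
    move: (nth (0, 0) E q) h1 h2 h3 => [a c] /= h1 h2 h3.
    have -> : n * k + NN k * bb n k = size (encode n k i j (a, c) ++ back_tag n k (pair_pos k i j)).
      by rewrite size_cat encode_size ?back_size ?pair_pos_le //= ?h1 ?h3; lia.
    by rewrite count_nth_iota tail_count addnC.
have hst' : count (fun x => nth false s x != nth false (template n k) x) (iota 0 (LL n k)) <= dd n k.
  by rewrite -hs -hamming_nth // hs tsz.
have hsw' : count (fun x => nth false s x != cf (p + x)) (iota 0 (LL n k)) <= dd n k.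
  move: hsw; rewrite hamming_nth ?size_substr ?hs ?csz //; last by rewrite -csz.
  rewrite (@eq_in_count _ _ (fun x => nth false s x != cf (p + x))) //.
  by move=> x; rewrite mem_iota => /andP[_ hx]; rewrite nth_substr.
have htw : count (fun x => nth false (template n k) x != cf (p + x)) (iota 0 (LL n k)) <= 2 * dd n k.
  have h := @cnt_le_n (fun x => nth false (template n k) x != cf (p + x)) pred0
    (fun x => nth false s x != nth false (template n k) x)
    (fun x => nth false s x != cf (p + x)) 0 (iota 0 (LL n k)).
  rewrite mul0n addn0 in h.
  have : count (fun x => nth false (template n k) x != cf (p + x)) (iota 0 (LL n k)) <=
    count (fun x => nth false s x != nth false (template n k) x) (iota 0 (LL n k)) +
    count (fun x => nth false s x != cf (p + x)) (iota 0 (LL n k)).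
    apply: h => x _ /=; rewrite mul0n addn0.
    by case: (nth false s x); case: (nth false (template n k) x); case: (cf (p + x)).
  move=> h2; apply: leq_trans h2 _; rewrite mul2n -addnn; exact: leq_add.
have hfr : count (fun x => (x %% (3 * (n * k)).+1 != 3 * (n * k)) != cf (p + x))
      (iota 0 (n * k * (3 * (n * k)).+1)) <=
    count (fun x => nth false (template n k) x != cf (p + x)) (iota 0 (LL n k)).
  rewrite (@eq_in_count _ _ (fun x => nth false (template n k) x != cf (p + x))).
    by apply: cnt_sub.
  move=> x; rewrite mem_iota /= => hx.
  by rewrite /template nth_cat front_size hx front_nth.
move: H hfr htw; rewrite /dd; lia.
Qed.

Lemma count_neg (e : seq bool) : count (fun y => true != y) e = size e - count id e.
Proof. by rewrite -(count_predC id e) addKn; apply: eq_count => -[]. Qed.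

Theorem lemma3 (n k : nat) (E : seq (nat * nat)) (s : seq bool) :
  simple_graph_edges n E -> 3 <= k ->
  is_solution n k E s ->
  prefix (front_tag n k) s /\
  (forall p, is_match_at (template n k) s (dd n k) p ->
     prefix (front_tag n k) (substr (template n k) p (size s))) /\
  (forall i j p, 1 <= i -> i < j -> j <= k ->
     is_match_at (choice_string n k E i j) s (dd n k) p ->
     prefix (front_tag n k) (substr (choice_string n k E i j) p (size s))).
Proof.
move=> hG hk [hs [[p0 hp0] hc]].
have [uE hE] := hG.
have hN : 3 <= NN k by rewrite /NN; have := leq_bin2l 2 hk.
have hbb : 2 <= bb n k by rewrite /bb; lia.
have [p1 hm1] := hc 1 2 (leqnn 1) (ltnSn 1) (ltnW hk).
have hn : 2 <= n.
  move: hE hm1; case: (E) => [|e E'] hE' hm1.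
    move: hm1 => [hp _]; rewrite hs /choice_string /= LL_eq in hp.
    have : 0 < NN k * bb n k by rewrite muln_gt0; apply/andP; split; lia.
    lia.
  have [h1 [h2 h3]] := hE' e (mem_head _ _); lia.
have hK : 2 * k <= n * k by rewrite leq_mul2r hn orbT.
have tsz := template_size n k.
have tsub : forall p, p + size s <= size (template n k) ->
    p = 0 /\ substr (template n k) p (size s) = template n k.
  move=> p; rewrite tsz hs => hp.
  have p0' : p = 0 by lia.
  by split => //; rewrite p0' /substr drop0 take_oversize // tsz.
have hst : hamming s (template n k) <= dd n k.
  by have [_ <-] := tsub _ hp0.1; exact: hp0.2.
have hFL : n * k * (3 * (n * k)).+1 <= LL n k by rewrite LL_eq leq_addr.
have win : forall i j p, 1 <= i -> i < j -> j <= k ->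
    is_match_at (choice_string n k E i j) s (dd n k) p ->
    p %/ LL n k < size E /\
    forall o, o < LL n k ->
      nth false (substr (choice_string n k E i j) p (size s)) o =
      nth false (block n k i j (nth (0, 0) E (p %/ LL n k))) o.
  move=> i j p hi hij hjk hm.
  have al := aligned hG hk hn hs hst hi hij hjk hm.
  have bsz : forall e, e \in E -> size (block n k i j e) = LL n k.
    move=> [a c] he; have [h1 [h2 h3]] := hE _ he; apply: block_size => //=;
      apply/andP; split; simpl in *; lia.
  have csz : size (choice_string n k E i j) = size E * LL n k by apply: size_flatten_map.
  have hp := hm.1; rewrite csz hs in hp.
  have ep : p = p %/ LL n k * LL n k by rewrite {1}(divn_eq p (LL n k)) al addn0.
  have hq : p %/ LL n k < size E.
    rewrite -(ltn_pmul2r (_ : 0 < LL n k)); last by lia.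
    lia.
  split => // o ho.
  rewrite nth_substr ?hs // {1}ep nth_flatten_map //.
have frontblk : forall i j e o, o < n * k * (3 * (n * k)).+1 ->
    nth false (block n k i j e) o = nth false (front_tag n k) o.
  by move=> i j e o ho; rewrite /block nth_cat front_size ho.
have fronttpl : forall o, o < n * k * (3 * (n * k)).+1 ->
    nth false (template n k) o = nth false (front_tag n k) o.
  by move=> o ho; rewrite /template nth_cat front_size ho.
split; last split.
- have [hq hw] := win 1 2 p1 (leqnn 1) (ltnSn 1) (ltnW hk) hm1.
  set e := nth (0, 0) E (p1 %/ LL n k) in hw.
  have [h1 [h2 h3]] : 1 <= e.1 /\ e.1 < e.2 /\ e.2 <= n by apply: hE; apply: mem_nth.
  have he1 : 1 <= e.1 <= n by apply/andP; split; lia.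
  have he2 : 1 <= e.2 <= n by apply/andP; split; lia.
  set bl := block n k 1 2 e.
  have esz : size (encode n k 1 2 e) = n * k by apply: encode_size => //; lia.
  have bksz : size (back_tag n k (pair_pos k 1 2)) = NN k * bb n k.
    by apply: back_size; apply: pair_pos_le => //; lia.
  have blsz : size bl = LL n k by apply: block_size => //; lia.
  have htb : hamming (template n k) bl = 2 * dd n k.
    rewrite /template /bl /block hamming_cat // hamming_refl add0n hamming_cat;
      last by rewrite size_nseq esz.
    have h4 := hamming_nseq true (encode n k 1 2 e); rewrite esz in h4.
    have h5 := hamming_nseq false (back_tag n k (pair_pos k 1 2)); rewrite bksz in h5.
    rewrite h4 h5.
    have -> : count (fun y => false != y) (back_tag n k (pair_pos k 1 2)) = bb n k.
      by rewrite -(back_count n k (pair_pos k 1 2)); apply: eq_count => -[].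
    have -> : count (fun y => true != y) (encode n k 1 2 e) = n * k - 2.
      by rewrite count_neg esz encode_count.
    rewrite /bb /dd. lia.
  have cst : count (fun x => nth false s x != nth false (template n k) x) (iota 0 (LL n k)) <= dd n k.
    by rewrite -hs -hamming_nth // hs tsz.
  have csb : count (fun x => nth false s x != nth false bl x) (iota 0 (LL n k)) <= dd n k.
    have := hm1.2; rewrite hamming_nth; last by rewrite size_substr //; have := hm1.1.
    rewrite hs (@eq_in_count _ _ (fun x => nth false s x != nth false bl x)) //.
    by move=> x; rewrite mem_iota => /andP[_ hx]; rewrite -hs hw // hs.
  have ctb : count (fun x => nth false (template n k) x != nth false bl x) (iota 0 (LL n k)) = 2 * dd n k.
    by rewrite -htb hamming_nth // tsz.
  rewrite prefixE; apply/eqP; apply: (@eq_from_nth _ false).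
    by rewrite size_takel front_size // hs.
  move=> o; rewrite size_takel ?front_size ?hs // => ho.
  rewrite nth_take //; apply/eqP; apply: contraT => hne.
  have h := @cnt_le_n (fun x => nth false (template n k) x != nth false bl x) (pred1 o)
    (fun x => nth false s x != nth false (template n k) x)
    (fun x => nth false s x != nth false bl x) 2 (iota 0 (LL n k)).
  have : count (fun x => nth false (template n k) x != nth false bl x) (iota 0 (LL n k)) +
      2 * count (pred1 o) (iota 0 (LL n k)) <=
    count (fun x => nth false s x != nth false (template n k) x) (iota 0 (LL n k)) +
    count (fun x => nth false s x != nth false bl x) (iota 0 (LL n k)).
    apply: h => x _ /=.
    case: (eqVneq x o) => [->|hxo].
      rewrite fronttpl // /bl frontblk // eqxx /= muln1.
      by rewrite (negbTE hne) /=.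
    rewrite muln0 addn0.
    by case: (nth false s x); case: (nth false (template n k) x); case: (nth false bl x).
  have -> : count (pred1 o) (iota 0 (LL n k)) = 1.
    by rewrite count_uniq_mem ?iota_uniq // mem_iota; lia.
  lia.
- move=> p hm; have [_ ->] := tsub _ hm.1.
  by rewrite /template prefix_prefix.
- move=> i j p hi hij hjk hm.
  have [hq hw] := win i j p hi hij hjk hm.
  rewrite prefixE; apply/eqP; apply: (@eq_from_nth _ false).
    rewrite size_takel front_size // size_substr hs //; last by have := hm.1; rewrite hs.
  move=> o; rewrite size_takel ?front_size => [ho|]; last first.
    by rewrite size_substr hs //; have := hm.1; rewrite hs.
  by rewrite nth_take // hw ?frontblk //; lia.
Qed.
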